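(* Let $n$ be a non-negative integer and let $a,b$ be integers with $\gcd(a,b)=1$, $b\neq 0$ and $b\neq\pm1$. Let $C_k=\frac{1}{k+1}\binom{2k}{k}$ be the $k$-th Catalan number and let $M_N(a,b)=\sum_{k=0}^{\lfloor N/2\rfloor}\binom{N}{2k}C_k a^k b^{N-2k}$ be the generalized Motzkin number. Then $$\omega_b\big(M_{2n}(a,b)\big)=\omega_b(C_n),\qquad \omega_b\big(M_{2n+1}(a,b)\big)=1+\omega_b\big((2n+1)C_n\big).$$
   Context: For an integer $x$ with $x\neq 0,\pm1$ and a nonzero integer $y$, $\omega_x(y)$ denotes the largest non-negative integer $e$ such that $x^e$ divides $y$. *)

(* Defs.v *)
From HB Require Import structures.
From mathcomp Require Import all_boot all_order all_algebra.
Set Implicit Arguments. Unset Strict Implicit. Unset Printing Implicit Defensive.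
Import Order.TTheory GRing.Theory Num.Theory.
Local Open Scope ring_scope.

Definition catalan (k : nat) : nat := ('C(2 * k, k) %/ k.+1)%N.

Definition motzkin (N : nat) (a b : int) : int :=
  \sum_(k < N./2.+1) ('C(N, 2 * k))%:Z * (catalan k)%:Z * a ^+ k * b ^+ (N - 2 * k).

(* omega_x(y): the largest e >= 0 with x^e | y. For |x| >= 2 and y <> 0 any such e
   satisfies e <= |y|, so the maximum over e < |y|+1 is the largest one. *)
Definition omega (x y : int) : nat :=
  (\max_(e < `|y|%N.+1 | (x ^+ e %| y)%Z) (e : nat))%N.

(* Main.v *)
Require Import Defs.
From HB Require Import structures.
From mathcomp Require Import all_boot all_order all_algebra.
From mathcomp Require Import zify.
Import Order.TTheory GRing.Theory Num.Theory.

Lemma pow_big j : 0 < j -> (2 * j).+1 < 2 ^ (2 * j).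
Proof.
case: j => // j _.
have -> : 2 * j.+1 = (2 * j).+2 by lia.
rewrite !expnS.
have := ltn_expl (2 * j) (isT : 1 < 2). lia.
Qed.

Lemma div_term j q : 0 < q -> (2 * j).+1 %/ q <= 2 * (j %/ q) + 1.
Proof.
move=> q0. rewrite -ltnS ltn_divLR //.
have := ltn_ceil j q0. set d := j %/ q. nia.
Qed.

Lemma key p j : prime p -> 0 < j ->
  logn p (2 * j).+1`! <= 2 * logn p j`! + (2 * j).-1.
Proof.
move=> pp j0. have p1 := prime_gt1 pp. have p0 := prime_gt0 pp.
rewrite !logn_fact //.
have -> : \sum_(1 <= k < j.+1) j %/ p ^ k = \sum_(1 <= k < (2 * j).+2) j %/ p ^ k.
  rewrite [RHS](big_cat_nat _ (n := j.+1)) //=; last lia.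
  rewrite [X in _ = _ + X]big_nat_cond [X in _ = _ + X]big1 ?addn0 // => i /andP[/andP[hi _] _].
  apply: divn_small. apply: leq_trans (ltn_expl j p1) _. apply: leq_pexp2l => //. lia.
rewrite (big_cat_nat _ (n := 2 * j)) //=; try lia.
rewrite [X in _ + X <= _]big_nat_cond [X in _ + X <= _]big1 ?addn0; last first.
  move=> i /andP[/andP[hi _] _]. apply: divn_small.
  have h1 := pow_big j j0. have h2 := leq_pexp2l (isT : 0 < 2) hi.
  have h3 : 2 ^ i <= p ^ i by rewrite leq_exp2r //; lia.
  lia.
rewrite (big_cat_nat _ (n := 2 * j) (m := 1) (p := (2 * j).+2)) //=; try lia.
set G2 := \sum_(2 * j <= i < (2 * j).+2) j %/ p ^ i.
suff : \sum_(1 <= i < 2 * j) (2 * j).+1 %/ p ^ i <= 2 * \sum_(1 <= i < 2 * j) j %/ p ^ i + (2 * j).-1 by lia.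
rewrite big_distrr /=.
have -> : (2 * j).-1 = \sum_(1 <= i < 2 * j) 1 by rewrite sum_nat_const_nat; lia.
rewrite -big_split /=. apply: leq_sum => i _. apply: div_term. by rewrite expn_gt0 p0.
Qed.

Lemma catalanE k : catalan k * k.+1 = 'C(2 * k, k).
Proof.
rewrite /catalan divnK //.
have h1 := mul_bin_diag (2 * k) k. have h2 := mul_bin_down (2 * k) k.
rewrite (_ : 2 * k - k = k) in h2; last lia.
apply/dvdnP; exists ('C(2 * k, k) - 'C(2 * k, k.+1)). nia.
Qed.

Lemma cat_gt0 k : 0 < catalan k.
Proof.
have h := catalanE k. have : 0 < 'C(2 * k, k) by rewrite bin_gt0; lia.
by rewrite -h muln_gt0 => /andP[].
Qed.

Lemma cat_fact k : catalan k * (k`! * k.+1`!) = (2 * k)`!.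
Proof.
have := bin_fact (leq_addl k k). rewrite addKn addnn -mul2n -catalanE.
move=> <-. rewrite factS. lia.
Qed.

Lemma dvd_by_logn m N : 0 < m -> 0 < N ->
  (forall p, prime p -> p %| m -> logn p m <= logn p N) -> m %| N.
Proof.
move=> m0 N0 H. apply/dvdn_partP => // p.
rewrite mem_primes => /and3P[pp _ pm].
rewrite p_part pfactor_dvdn //. exact: H.
Qed.

Lemma even_dvd B n k e : 0 < B -> k < n -> B ^ e %| catalan n ->
  B ^ e.+1 %| 'C(2 * n, 2 * k) * catalan k * B ^ (2 * n - 2 * k).
Proof.
move=> B0 kn He.
have j0 : 0 < n - k by lia.
have E1 : 2 * n - 2 * k = 2 * (n - k) by lia.
have E2 : n.+1 - k.+1 = n - k by lia.
rewrite E1.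
have P1 : 0 < 'C(2 * n, 2 * k) by rewrite bin_gt0; lia.
apply: dvd_by_logn; first by rewrite expn_gt0 B0.
  by rewrite !muln_gt0 P1 cat_gt0 expn_gt0 B0.
move=> p pp pB.
have s1 : 0 < logn p B.
  rewrite logn_gt0 mem_primes pp B0 /=. by rewrite Euclid_dvdX in pB => //; case/andP: pB.
have H6 : logn p (B ^ e) <= logn p (catalan n) by apply: dvdn_leq_log; rewrite ?cat_gt0.
have I1 := congr1 (logn p) (bin_fact (ltnW kn)).
have I2 := congr1 (logn p) (@bin_fact n.+1 k.+1 ltac:(lia)).
have I3 := congr1 (logn p) (cat_fact n).
have I4 := congr1 (logn p) (cat_fact k).
have I5 := congr1 (logn p) (@bin_fact (2 * n) (2 * k) ltac:(lia)).
have K := key p (n - k) pp j0.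
rewrite E2 E1 in I2 I5.
rewrite !factS in I2 I3 I4 K.
rewrite !lognM in I1 I2 I3 I4 I5 K *; rewrite ?muln_gt0 ?fact_gt0 ?cat_gt0 ?bin_gt0 ?expn_gt0 ?B0 ?andbT //; try lia.
rewrite !lognX in H6 *.
set s := logn p B in s1 H6 *.
set j := n - k in j0 K I1 I2 I5 *.
have h : 2 * j + s <= 2 * j * s + 1 by nia.
lia.
Qed.

Lemma odd_dvd B n k e : 0 < B -> k < n -> B ^ e %| (2 * n).+1 * catalan n ->
  B ^ e.+2 %| 'C((2 * n).+1, 2 * k) * catalan k * B ^ ((2 * n).+1 - 2 * k).
Proof.
move=> B0 kn He.
have j0 : 0 < n - k by lia.
have E1 : (2 * n).+1 - 2 * k = (2 * (n - k)).+1 by lia.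
have E2 : n.+1 - k.+1 = n - k by lia.
rewrite E1.
have P1 : 0 < 'C((2 * n).+1, 2 * k) by rewrite bin_gt0; lia.
apply: dvd_by_logn; first by rewrite expn_gt0 B0.
  by rewrite !muln_gt0 P1 cat_gt0 expn_gt0 B0.
move=> p pp pB.
have s1 : 0 < logn p B.
  rewrite logn_gt0 mem_primes pp B0 /=. by rewrite Euclid_dvdX in pB => //; case/andP: pB.
have H6 : logn p (B ^ e) <= logn p ((2 * n).+1 * catalan n) by apply: dvdn_leq_log; rewrite ?muln_gt0 ?cat_gt0.
have I1 := congr1 (logn p) (bin_fact (ltnW kn)).
have I2 := congr1 (logn p) (@bin_fact n.+1 k.+1 ltac:(lia)).
have I3 := congr1 (logn p) (cat_fact n).
have I4 := congr1 (logn p) (cat_fact k).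
have I5 := congr1 (logn p) (@bin_fact (2 * n).+1 (2 * k) ltac:(lia)).
have K := key p (n - k) pp j0.
rewrite E2 E1 in I2 I5.
rewrite !factS in I2 I3 I4 K I5.
rewrite lognX.
rewrite !lognM in I1 I2 I3 I4 I5 K H6 *; rewrite ?muln_gt0 ?fact_gt0 ?cat_gt0 ?bin_gt0 ?expn_gt0 ?B0 ?andbT //; try lia.
rewrite !lognX in H6 *.
set s := logn p B in s1 H6 *.
set j := n - k in j0 K I1 I2 I5 *.
have h : 2 * j + s <= 2 * j * s + 1 by nia.
lia.
Qed.

Lemma omega_eq (b y : int) e : (1 < `|b|)%N -> y != 0 ->
  (b ^+ e %| y)%Z -> ~~ (b ^+ e.+1 %| y)%Z -> omega b y = e.
Proof.
move=> b1 y0 h1 h2. rewrite /omega. apply/eqP; rewrite eqn_leq; apply/andP; split.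
- apply/bigmax_leqP => i hi. rewrite leqNgt; apply/negP => ei. apply: (negP h2).
  apply: dvdz_trans hi. exact: dvdz_exp2l.
- have ey : (e < `|y|.+1)%N.
    have yp : (0 < `|y|)%N by rewrite absz_gt0.
    move: h1; rewrite dvdzE abszX => /dvdn_leq => /(_ yp) h.
    have := ltn_expl e b1. lia.
  exact: (@leq_bigmax_cond _ _ _ (Ordinal ey)).
Qed.

Lemma exval B y : 1 < B -> 0 < y -> exists e, B ^ e %| y /\ ~~ (B ^ e.+1 %| y).
Proof.
move=> B1 y0.
have ex : exists i, (fun i => B ^ i %| y) i by exists 0; rewrite expn0 dvd1n.
have ub : forall i, (fun i => B ^ i %| y) i -> i <= y.
  move=> i /= /dvdn_leq => /(_ y0) h. have := ltn_expl i B1. lia.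
case: (ex_maxnP ex ub) => m hm hmax. exists m; split => //.
apply/negP => h. have := hmax _ h. lia.
Qed.

Local Open Scope ring_scope.

Theorem theorem9 (n : nat) (a b : int) :
  gcdz a b = 1%N -> b != 0 -> b != 1 -> b != -1 ->
  omega b (motzkin (2 * n) a b) = omega b (catalan n)%:Z /\
  omega b (motzkin (2 * n).+1 a b) = (1 + omega b (((2 * n).+1 * catalan n)%N)%:Z)%N.
Proof.
move=> hg hb0 hb1 hbm.
have B1 : (1 < `|b|)%N.
  by move: hb0 hb1 hbm; clear; case: b => [[|[|m]]|[|m]].
have B0 : (0 < `|b|)%N by lia.
have cop : coprime `|b| `|a|.
  by rewrite coprime_sym /coprime; move: hg; rewrite /gcdz => -[->].
have copX : forall e : nat, coprime (`|b| ^ e) (`|a| ^ n) by move=> e; rewrite coprimeXl // coprimeXr.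
split.
- have h2 : ((2 * n)./2 = n)%N by rewrite mul2n; exact: (half_bit_double n false).
  rewrite /motzkin h2 big_ord_recr /= binn subnn expr0 mulr1 mul1r.
  have [e [he1 he2]] := exval _ _ B1 (cat_gt0 n).
  set S := (\sum_(i < n) _).
  have hS : (b ^+ e.+1 %| S)%Z.
    apply: rpred_sum => k _.
    rewrite dvdzE !abszX !abszM !abszX !absz_nat mulnAC. apply: dvdn_mulr.
    exact: even_dvd.
  have nd : ~~ (b ^+ e.+1 %| S + (catalan n)%:Z * a ^+ n)%Z.
    rewrite rpredDl // dvdzE !abszX !abszM !abszX !absz_nat Gauss_dvdl //.
  rewrite (omega_eq _ _ e) //.
  + rewrite (omega_eq _ _ e) //.
    * by rewrite eqz_nat -lt0n cat_gt0.
    * by rewrite dvdzE abszX absz_nat.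
    * by rewrite dvdzE abszX absz_nat.
  + by apply: contraNneq nd => ->; rewrite dvdz0.
  + rewrite rpredD //.
    * apply: dvdz_trans hS. exact: dvdz_exp2l.
    * rewrite dvdzE !abszX !abszM !abszX !absz_nat. exact: dvdn_mulr.
- have h2 : ((2 * n).+1./2 = n)%N by rewrite mul2n; exact: (half_bit_double n true).
  rewrite /motzkin h2 big_ord_recr /= binSn (_ : ((2 * n).+1 - 2 * n = 1)%N); last by lia.
  rewrite expr1.
  have hx : (0 < (2 * n).+1 * catalan n)%N by rewrite muln_gt0 cat_gt0.
  have [e [he1 he2]] := exval _ _ B1 hx.
  set S := (\sum_(i < n) _).
  have hS : (b ^+ e.+2 %| S)%Z.
    apply: rpred_sum => k _.
    rewrite dvdzE !abszX !abszM !abszX !absz_nat mulnAC. apply: dvdn_mulr.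
    exact: odd_dvd.
  have nd : ~~ (b ^+ e.+2 %| S + ((2 * n).+1)%:Z * (catalan n)%:Z * a ^+ n * b)%Z.
    rewrite rpredDl // dvdzE !abszX !abszM !abszX !absz_nat expnSr dvdn_pmul2r // Gauss_dvdl //.
  rewrite add1n (omega_eq _ _ e.+1) //.
  + rewrite (omega_eq _ _ e) //.
    * by rewrite eqz_nat -lt0n muln_gt0 cat_gt0.
    * by rewrite dvdzE abszX absz_nat.
    * by rewrite dvdzE abszX absz_nat.
  + by apply: contraNneq nd => ->; rewrite dvdz0.
  + rewrite rpredD //.
    * apply: dvdz_trans hS. exact: dvdz_exp2l.
    * rewrite dvdzE !abszX !abszM !abszX !absz_nat expnSr. apply: dvdn_mul => //. exact: dvdn_mulr.
Qed.
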